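(* Let $d\ge2$, $(S,\mathfrak n,\mathbf k)$ a complete regular local ring with $\mathbf k$ algebraically closed of characteristic not dividing $d$, $0\ne f\in\mathfrak n^2$, and $R^\sharp=S[[z]]/(f+z^d)$. Let $N$ be a maximal Cohen-Macaulay $R^\sharp$-module and $X\in\mathrm{MF}_S^d(f)$. Then $X^{\sharp\flat}\cong\bigoplus_{k\in\mathbb Z_d}T^k(X)$ in $\mathrm{MF}_S^d(f)$ and $N^{\flat\sharp}\cong\bigoplus_{k\in\mathbb Z_d}(\sigma^k)^*N$ as $R^\sharp$-modules.
   Context: $\mathrm{MF}_S^d(f)$ is the category of matrix factorizations of $f$ with $d$ factors: objects are $X=(\phi_1:F_2\to F_1,\dots,\phi_d:F_1\to F_d)$, $F_i$ finitely generated free $S$-modules of equal rank, with $\phi_1\cdots\phi_d=f\cdot1_{F_1}$; morphisms $(\alpha_1,\dots,\alpha_d)$, $\alpha_i:F_i\to F_i'$, with $\alpha_i\phi_i=\phi_i'\alpha_{i+1}$ (indices mod $d$). The shift functor is $T(\phi_1,\dots,\phi_d)=(\phi_2,\dots,\phi_d,\phi_1)$. A maximal Cohen-Macaulay (MCM) $R^\sharp$-module is the same as a finitely generated $R^\sharp$-module that is free over $S$. Fix $\mu\in S$ with $\mu^d=-1$ and a primitive $d$th root of unity $\omega\in S$ (these exist). For an MCM $R^\sharp$-module $N$ with $\phi:N\to N$ the $S$-linear map given by multiplication by $z$, set $N^\flat=(\mu\phi,\mu\phi,\dots,\mu\phi)\in\mathrm{MF}_S^d(f)$. For $X=(\phi_1,\dots,\phi_d)$,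 $X^\sharp$ is the $S$-module $F_d\oplus F_{d-1}\oplus\cdots\oplus F_1$ with $z\cdot(x_d,x_{d-1},\dots,x_1)=(\mu^{-1}\phi_d(x_1),\mu^{-1}\phi_{d-1}(x_d),\dots,\mu^{-1}\phi_1(x_2))$, an MCM $R^\sharp$-module. $\sigma:R^\sharp\to R^\sharp$ is the automorphism fixing $S$ with $\sigma(z)=\omega z$, and $(\sigma^k)^*N$ denotes $N$ with scalars restricted along $\sigma^k$. *)

(* Defs.v *)
From HB Require Import structures.
From mathcomp Require Import all_boot all_order all_algebra.
Set Implicit Arguments. Unset Strict Implicit. Unset Printing Implicit Defensive.
Import Order.TTheory GRing.Theory Num.Theory.
Local Open Scope ring_scope.

Section CommAlg.
Variable S : comUnitRingType.

Definition is_ideal (I : S -> Prop) : Prop :=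
  [/\ I 0, (forall x y, I x -> I y -> I (x + y)) & (forall a x, I x -> I (a * x))].

Definition gen_by (I : S -> Prop) (s : seq S) : Prop :=
  forall x, I x <-> exists c : 'I_(size s) -> S, x = \sum_(i < size s) c i * s`_i.

Definition noetherian : Prop :=
  forall I, is_ideal I -> exists s, gen_by I s.

(* local ring: the non-units form an ideal (the maximal ideal n) *)
Definition local_ring : Prop :=
  forall x y : S, x \notin GRing.unit -> y \notin GRing.unit -> (x + y) \notin GRing.unit.

Definition maxl : S -> Prop := fun x => x \notin GRing.unit.

Fixpoint ideal_pow (I : S -> Prop) (k : nat) : S -> Prop :=
  match k with
  | 0 => fun _ => True
  | k'.+1 => fun x => exists (m : nat) (a b : 'I_m -> S),
      [/\ forall i, I (a i), forall i, ideal_pow I k' (b i) & x = \sum_(i < m) a i * b i]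
  end.

(* complete (and separated) in the n-adic topology *)
Definition adic_complete (I : S -> Prop) : Prop :=
  (forall x, (forall k, ideal_pow I k x) -> x = 0) /\
  forall u : nat -> S,
    (forall k, exists N, forall i j, (N <= i)%N -> (N <= j)%N -> ideal_pow I k (u i - u j)) ->
    exists L, forall k, exists N, forall i, (N <= i)%N -> ideal_pow I k (L - u i).

Definition prime_ideal (P : S -> Prop) : Prop :=
  [/\ is_ideal P, ~ P 1 & forall x y, P (x * y) -> P x \/ P y].

Definition prime_chain (n : nat) : Prop :=
  exists c : nat -> S -> Prop,
    (forall i, (i <= n)%N -> prime_ideal (c i)) /\
    (forall i, (i < n)%N -> (forall x, c i x -> c i.+1 x) /\ exists x, c i.+1 x /\ ~ c i x).

Definition krull_dim (n : nat) : Prop := prime_chain n /\ ~ prime_chain n.+1.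

Definition emb_dim (e : nat) : Prop :=
  (exists s, size s = e /\ gen_by maxl s) /\ (forall s, gen_by maxl s -> (e <= size s)%N).

Definition complete_regular_local : Prop :=
  [/\ local_ring, noetherian, adic_complete maxl & exists e, emb_dim e /\ krull_dim e].

(* residue field S/n algebraically closed: every monic nonconstant
   polynomial over S has a root modulo n *)
Definition residue_alg_closed : Prop :=
  forall p : {poly S}, p \is monic -> (1 < size p)%N -> exists x, maxl p.[x].

(* char of the residue field does not divide d  <=>  d is nonzero in S/n *)
Definition residue_char_not_dvd (d : nat) : Prop := (d%:R : S) \is a GRing.unit.

End CommAlg.

Definition addI (d : nat) (i : 'I_d) (k : nat) : 'I_d :=
  Ordinal (ltn_pmod (i + k) (leq_ltn_trans (leq0n i) (ltn_ord i))).

Section MF.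
Variables (S : comUnitRingType) (d : nat).

(* X = (phi 0, ..., phi (d-1)) = (phi_1, ..., phi_d), all F_i = S^r (column vectors),
   phi_i : F_{i+1} -> F_i; object of MF^d_S(f) *)
Definition is_MF (r : nat) (f : S) (phi : 'I_d -> 'M[S]_r) : Prop :=
  \prod_(i < d) phi i = f%:M.

Definition MF_iso (r : nat) (phi psi : 'I_d -> 'M[S]_r) : Prop :=
  exists alpha : 'I_d -> 'M[S]_r,
    (forall i, alpha i \in unitmx) /\ (forall i, alpha i *m phi i = psi i *m alpha (addI i 1)).

Definition MF_shift (r : nat) (k : nat) (phi : 'I_d -> 'M[S]_r) : 'I_d -> 'M[S]_r :=
  fun i => phi (addI i k).

Definition MF_sum_shifts (r : nat) (phi : 'I_d -> 'M[S]_r)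
  : 'I_d -> 'M[S]_(\sum_(k < d) (fun _ : 'I_d => r) k) :=
  fun i => mxdiag (fun k : 'I_d => MF_shift k phi i).

(* MCM R#-module, R# = S[[z]]/(f + z^d): free S-module S^r with z acting by
   phi, subject to phi^d = -f *)
Definition is_MCM (r : nat) (f : S) (phi : 'M[S]_r) : Prop := phi ^+ d = - f%:M.

Definition Rsharp_iso (r : nat) (A B : 'M[S]_r) : Prop :=
  exists P : 'M[S]_r, P \in unitmx /\ P *m A = B *m P.

Definition flat (mu : S) (r : nat) (phi : 'M[S]_r) : 'I_d -> 'M[S]_r :=
  fun _ => mu *: phi.

(* X^sharp = F_d (+) F_{d-1} (+) ... (+) F_1: block position p holds F_{d-p};
   z sends block p-1 (mod d) to block p via mu^-1 phi_{d-p} *)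
Definition sharp (mu : S) (r : nat) (phi : 'I_d -> 'M[S]_r)
  : 'M[S]_(\sum_(k < d) (fun _ : 'I_d => r) k) :=
  mxblock (fun p q : 'I_d => if p == addI q 1 then mu^-1 *: phi (rev_ord p) else 0).

(* direct sum over k in Z_d of (sigma^k)^* N: z acts by omega^k phi *)
Definition sum_twists (omega : S) (r : nat) (phi : 'M[S]_r)
  : 'M[S]_(\sum_(k < d) (fun _ : 'I_d => r) k) :=
  mxdiag (fun k : 'I_d => omega ^+ k *: phi).

End MF.

(* Main.v *)
Require Import Defs.
From HB Require Import structures.
From mathcomp Require Import all_boot all_order all_algebra.
Import GRing.Theory.
Local Open Scope ring_scope.
From mathcomp Require Import ring.

Section Blk.
Variables (R : comUnitRingType) (m r : nat).
Local Notation Blk B := (@mxblock R m m (fun _ => r) (fun _ => r) B).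

Lemma blkZ (a : R) B : a *: Blk B = Blk (fun i j => a *: B i j).
Proof. by apply/matrixP => s t; rewrite !mxE. Qed.

Lemma mxdiag_blk (B : 'I_m -> 'M[R]_r) :
  mxdiag B = Blk (fun i j => if i == j then B i else 0).
Proof. rewrite /mxdiag; apply: eq_mxblock => i j; case: eqP => // _; by rewrite conform_mx_id. Qed.

Lemma blk1 : (1%:M : 'M[R]_(\sum_(i < m) (fun _ : 'I_m => r) i)) = Blk (fun i j => if i == j then 1%:M else 0).
Proof. by rewrite -(mxdiagZ (p_ := fun _ : 'I_m => r)) mxdiag_blk. Qed.

Lemma sum_ifl {V : nmodType} (k : 'I_m) (F : 'I_m -> V) :
  \sum_(j < m) (if j == k then F j else 0) = F k.
Proof. by rewrite -big_mkcond big_pred1_eq. Qed.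

Lemma sum_ifr {V : nmodType} (k : 'I_m) (F : 'I_m -> V) :
  \sum_(j < m) (if k == j then F j else 0) = F k.
Proof. rewrite -[RHS](sum_ifl k F); apply: eq_bigr => j _; by rewrite eq_sym. Qed.
End Blk.

Lemma geom0 (S : comUnitRingType) (hloc : local_ring S) (d : nat)
  (hd : (d%:R : S) \is a GRing.unit) (z : S) :
  z ^+ d = 1 -> z != 1 -> \sum_(k < d) z ^+ k = 0.
Proof.
move=> hz hz1; have h := subrX1 z d; rewrite hz subrr in h.
case: (boolP (z - 1 \is a GRing.unit)) => u.
  by apply: (mulrI u); rewrite mulr0 -h.
exfalso; move: hz1; rewrite -subr_eq0 => /negP; apply.
set G := \sum_(k < d) z ^+ k in h.
set N := \sum_(k < d) (z ^+ k - 1).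
have hN : N \notin GRing.unit.
  apply: (big_ind (fun x => x \notin GRing.unit)).
  - by rewrite unitr0.
  - by move=> x y; apply: hloc.
  move=> k _; rewrite subrX1 unitrM negb_and u //.
have hGN : G = d%:R + N.
  by rewrite /N sumrB sumr_const card_ord addrC subrK.
have Gu : G \is a GRing.unit.
  apply/negPn/negP => Gn.
  have : (d%:R : S) \notin GRing.unit.
    have -> : (d%:R : S) = G + - N by rewrite hGN addrK.
    by apply: hloc => //; rewrite unitrN.
  by rewrite hd.
by apply/eqP; apply: (mulIr Gu); rewrite mul0r h.
Qed.
Lemma revE d' (p : 'I_d'.+2) : rev_ord p = - (p + 1).
Proof. apply/eqP; rewrite -addr_eq0; apply/eqP; apply: val_inj => /=. 
by rewrite (modn_small (_ : 1 < d'.+2)%N) // modnDmr addn1 subnK ?modnn.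
Qed.

Lemma addIE d' (i k : 'I_d'.+2) : addI i k = i + k.
Proof. by apply: val_inj. Qed.
Lemma addI1 d' (i : 'I_d'.+2) : addI i 1 = i + 1.
Proof. by apply: val_inj. Qed.

Lemma ifmull (R : comUnitRingType) r (c : bool) (A B : 'M[R]_r) :
  (if c then A else 0) *m B = if c then A *m B else 0.
Proof. by case: c; rewrite ?mul0mx. Qed.
Lemma ifmulr (R : comUnitRingType) r (c : bool) (A B : 'M[R]_r) :
  A *m (if c then B else 0) = if c then A *m B else 0.
Proof. by case: c; rewrite ?mulmx0. Qed.

Lemma part1 d' (S : comUnitRingType) (mu : S) (hmu : mu \is a GRing.unit)
  s (X : 'I_d'.+2 -> 'M[S]_s) :
  MF_iso (@flat S d'.+2 mu _ (sharp mu X)) (MF_sum_shifts X).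
Proof.
pose alpha (i : 'I_d'.+2) := @mxblock S _ _ (fun _ : 'I_d'.+2 => s) (fun _ : 'I_d'.+2 => s)
   (fun k p => if p == -1 - k - i then 1%:M else 0).
exists alpha; split.
  move=> i; suff h : alpha i *m alpha i = 1%:M by case: (mulmx1_unit h).
  rewrite mul_mxblock blk1; apply: eq_mxblock => k l.
  under eq_bigr do rewrite ifmull mul1mx.
  rewrite sum_ifl.
  have -> : (l == -1 - (-1 - k - i) - i) = (k == l).
    by rewrite eq_sym; congr (_ == _); ring.
  by [].
move=> i; rewrite /flat /sharp /MF_sum_shifts blkZ mxdiag_blk !mul_mxblock.
apply: eq_mxblock => k q.
under eq_bigr do rewrite ifmull mul1mx.
under [RHS]eq_bigr do rewrite ifmull.
rewrite sum_ifl sum_ifr ifmulr !addI1.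
have -> : (-1 - k - i == q + 1) = (q == -1 - k - (i + 1)).
  apply/eqP/eqP => h.
    by rewrite -[q](addrK 1) -h; ring.
  by rewrite h; ring.
case: ifP => _; last by rewrite scaler0.
rewrite scalerA mulrV // scale1r mulmx1 revE /MF_shift addIE.
congr (X _); ring.
Qed.

Lemma part2 d' (S : comUnitRingType) (hloc : local_ring S) (mu omega : S)
  (hmu : mu \is a GRing.unit) (hdu : (d'.+2%:R : S) \is a GRing.unit)
  (hom : d'.+2.-primitive_root omega) r (phiN : 'M[S]_r) :
  Rsharp_iso (sharp mu (@flat S d'.+2 mu _ phiN)) (sum_twists d'.+2 omega phiN).
Proof.
have om1 : omega ^+ d'.+2 = 1 by exact: (prim_expr_order hom).
have omu : omega \is a GRing.unit.
  by rewrite -(unitrX_pos _ (ltn0Sn d'.+1)) om1 unitr1.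
pose P := @mxblock S _ _ (fun _ : 'I_d'.+2 => r) (fun _ : 'I_d'.+2 => r)
   (fun k p => ((omega ^+ p) ^+ k)%:M).
pose Q := @mxblock S _ _ (fun _ : 'I_d'.+2 => r) (fun _ : 'I_d'.+2 => r)
   (fun l k => (((omega ^+ l)^-1) ^+ k * (d'.+2%:R)^-1)%:M).
exists P; split.
  suff h : Q *m P = 1%:M by case: (mulmx1_unit h).
  rewrite mul_mxblock blk1; apply: eq_mxblock => l m.
  under eq_bigr do rewrite -scalar_mxM.
  rewrite -raddf_sum /=.
  have -> : \sum_(i < d'.+2) ((omega ^+ l)^-1 ^+ i * (d'.+2%:R)^-1 * (omega ^+ m) ^+ i)
     = (d'.+2%:R)^-1 * \sum_(i < d'.+2) ((omega ^+ l)^-1 * omega ^+ m) ^+ i.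
    rewrite mulr_sumr; apply: eq_bigr => i _; rewrite exprMn; ring.
  case: eqP => [->|lm].
    rewrite (mulVr (unitrX m omu)) (eq_bigr (fun _ => 1)); last by move=> i _; rewrite expr1n.
    by rewrite sumr_const card_ord mulVr.
  rewrite geom0 //; first by rewrite mulr0 raddf0.
    by rewrite exprMn exprVn -!exprM ![(_ * d'.+2)%N]mulnC !exprM om1 !expr1n invr1 mulr1.
  apply/negP => /eqP h; apply: lm.
  have : omega ^+ m == omega ^+ l.
    by apply/eqP; rewrite -[omega ^+ m](mulVKr (unitrX l omu)) h mulr1.
  rewrite (eq_prim_root_expr hom) !modn_small // => /eqP h2.
  by apply: val_inj.
rewrite /sharp /flat /sum_twists mxdiag_blk !mul_mxblock.
apply: eq_mxblock => k q.
under eq_bigr do rewrite ifmulr.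
under [RHS]eq_bigr do rewrite ifmull.
rewrite sum_ifl sum_ifr scalerA mulVr // scale1r mul_scalar_mx mul_mx_scalar scalerA.
congr (_ *: _).
by rewrite /= (prim_expr_mod hom) addn1 exprSr exprMn mulrC.
Qed.

Theorem proposition2p4
  (d : nat) (S : comUnitRingType) (f mu omega : S)
  (r : nat) (phiN : 'M[S]_r) (s : nat) (X : 'I_d -> 'M[S]_s) :
  (2 <= d)%N ->
  complete_regular_local S ->
  residue_alg_closed S ->
  residue_char_not_dvd S d ->
  f != 0 ->
  ideal_pow (@maxl S) 2 f ->
  mu ^+ d = -1 ->
  d.-primitive_root omega ->
  is_MCM d f phiN ->
  is_MF f X ->
  MF_iso (@flat S d mu _ (sharp mu X)) (MF_sum_shifts X)
  /\ Rsharp_iso (sharp mu (@flat S d mu _ phiN)) (sum_twists d omega phiN).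
Proof.
case: d X => [|[|d']] X hd2 //.
case=> hloc _ _ _ _ hdu _ _ hmu hom _ _.
have mu_u : mu \is a GRing.unit.
  by rewrite -(unitrX_pos _ (ltn0Sn d'.+1)) hmu unitrN1.
split; first exact: part1.
exact: part2.
Qed.
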